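(* The 2-functors $(-)^1\colon\mathrm{Cat}^{H,\mathrm{shifts}}\to\mathrm{ModCat}_H$ and $(-)^\bullet\colon\mathrm{ModCat}_H\to\mathrm{Cat}^{H,\mathrm{shifts}}$ are well-defined 2-functors and form a 2-equivalence. Explicitly, there are 2-natural isomorphisms $\nu\colon((-)^\bullet)^1\Rightarrow\mathrm{id}$ with components $\nu_{(\mathcal C,\alpha)}$ the identity on objects and $f\mapsto f\circ\epsilon^\alpha_X$ on morphisms $f\in\mathrm{Hom}_{\mathcal C}(\alpha^1X,Y)$ (with trivial structure isomorphisms), and $\eta\colon((-)^1)^\bullet\Rightarrow\mathrm{id}$ with components $\eta_{\mathcal C}$ the identity on objects and $f\mapsto f\circ r_{X,h}$ on $f\in\mathrm{Hom}^1_{\mathcal C}(X\langle h\rangle,Y)$.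
   Context: $R$ is a nonzero commutative ring and $H$ a group. An $H$-Hom-graded category is an $R$-linear category $\mathcal C$ with $\mathrm{Hom}(X,Y)=\bigoplus_{h\in H}\mathrm{Hom}^h(X,Y)$, identities of degree 1, composition $\mathrm{Hom}^{h'}\times\mathrm{Hom}^h\to\mathrm{Hom}^{h'h}$; $\mathcal C^1$ is its degree-1 subcategory. A shift of $X$ by $a$ is an object $X\langle a\rangle$ with a degree-$a$ isomorphism $r_{X,a}\colon X\to X\langle a\rangle$. $\mathrm{Cat}^{H,\mathrm{shifts}}$ is the 2-category of $H$-Hom-graded categories admitting all shifts (each with a fixed choice of shifts), degree-preserving $R$-linear functors, and natural transformations with degree-1 components. An $H$-module category $(\mathcal C,\alpha)$: $R$-linear autoequivalences $\alpha^h$ with natural isos $\epsilon\colon\mathrm{id}\Rightarrow\alpha^1$, $\mu_{a,b}\colon\alpha^a\alpha^b\Rightarrow\alpha^{ab}$, $\mu_{1,h}(\epsilon\alpha^h)=\mathrm{id}=\mu_{h,1}(\alpha^h\epsilon)$, $\mu_{ab,c}(\mu_{a,b}\alpha^c)=\mu_{a,bc}(\alpha^a\mu_{b,c})$. An $H$-module functor $(F,s)\colon(\mathcal C,\alpha)\to(\mathcal D,\beta)$: $R$-linear $F$ with natural isos $s^h\colon\beta^hF\Rightarrow F\alpha^h$, $s^1_X\epsilon^\beta_{FX}=F\epsilon^\alpha_X$, $F(\mu^\alpha_{a,b})_X\,s^a_{\alpha^bX}\,\beta^a(s^b_X)=s^{ab}_X(\mu^\beta_{a,b})_{FX}$. An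 $H$-module natural transformation $\eta\colon(E,r)\Rightarrow(F,s)$: $R$-linear $\eta\colon E\Rightarrow F$ with $\eta_{\alpha^hX}r^h_X=s^h_X\beta^h(\eta_X)$. Composition $(E,r)\circ(F,s)=(EF,\ X\mapsto E(s^h_X)\circ r^h_{FX})$. $\mathrm{ModCat}_H$ is the resulting 2-category. The 2-functor $(-)^1$: $\mathcal C\mapsto(\mathcal C^1,\phi)$ with $\phi^aX=X\langle a\rangle$, $\phi^af=r_{Y,a}fr_{X,a}^{-1}$, $\epsilon_X=r_{X,1}$, $(\mu_{a,b})_X=r_{X,ab}r_{X,b}^{-1}r_{X\langle b\rangle,a}^{-1}$; $F\mapsto(F^1,s_F)$ with $(s^a_F)_X=F(r_{X,a})r_{FX,a}^{-1}$; $\eta\mapsto\eta$ restricted. The 2-functor $(-)^\bullet$: $(\mathcal C,\alpha)\mapsto(\mathcal C,\alpha)^\bullet$ (same objects, $\mathrm{Hom}^h(X,Y)=\mathrm{Hom}_{\mathcal C}(\alpha^hX,Y)$, $f'\circ^\bullet f=f'\circ\alpha^{h'}f\circ(\mu_{h',h})_X^{-1}$, $\mathrm{id}^\bullet_X=\epsilon_X^{-1}$, shifts $X\langle a\rangle=\alpha^aX$ with $r_{X,a}=\mathrm{id}_{\alpha^aX}$); $(F,s)\mapsto(F,s)^\bullet$ with $X\mapsto FX$ and $f\in\mathrm{Hom}_{\mathcal C}(\alpha^hX,Y)\mapsto Ff\circ s^h_X\in\mathrm{Hom}_{\mathcal D}(\beta^hFX,FY)$; $\eta\mapsto\eta^\bullet$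 with $\eta^\bullet_X=\eta_X\circ(\epsilon^\beta_{EX})^{-1}$. *)

(* Defs.v *)
From HB Require Import structures.
From mathcomp Require Import all_boot all_algebra monoid.

Set Implicit Arguments.
Unset Strict Implicit.
Unset Printing Implicit Defensive.

Import GRing.Theory.
Local Open Scope ring_scope.

Section Defs.
Variables (R : comNzRingType) (H : groupType).

Lemma deg_conj (a : H) : ((a * 1) * a^-1 = 1)%g.
Proof. rewrite mulg1; exact: mulgV. Qed.
Lemma deg_mu (a b : H) : (((a * b) * b^-1) * a^-1 = 1)%g.
Proof. by rewrite -(mulgA a) (mulgV b) mulg1; exact: mulgV. Qed.

(*  H-Hom-graded R-linear categories, presented by their homogeneous   *)
(*  components  Hom^h(X,Y) ; Hom(X,Y) is their direct sum.             *)
Record gcat := GCat {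
  gobj : Type;
  ghom : H -> gobj -> gobj -> lmodType R;
  gcomp : forall (a b : H) (X Y Z : gobj),
      ghom a Y Z -> ghom b X Y -> ghom (a * b)%g X Z;
  gid : forall X : gobj, ghom 1%g X X }.

Arguments ghom : clear implicits.
Arguments gcomp {_ _ _ _ _ _} _ _.

Definition gcast (C : gcat) (a b : H) (X Y : gobj C) (e : a = b)
  (f : ghom C a X Y) : ghom C b X Y :=
  eq_rect a (fun h => ghom C h X Y) f b e.

Definition is_gcat (C : gcat) : Prop :=
  [/\ (forall a b X Y Z (k : R) (g g' : ghom C a Y Z) (f : ghom C b X Y),
         gcomp (k *: g + g') f = k *: gcomp g f + gcomp g' f),
      (forall a b X Y Z (k : R) (g : ghom C a Y Z) (f f' : ghom C b X Y),
         gcomp g (k *: f + f') = k *: gcomp g f + gcomp g f'),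
      (forall a b c W X Y Z (h : ghom C a Y Z) (g : ghom C b X Y)
              (f : ghom C c W X),
         gcomp h (gcomp g f) = gcast (esym (mulgA a b c)) (gcomp (gcomp h g) f)),
      (forall a X Y (f : ghom C a X Y), gcast (mul1g a) (gcomp (gid Y) f) = f) &
      (forall a X Y (f : ghom C a X Y), gcast (mulg1 a) (gcomp f (gid X)) = f)].

(* a fixed choice of shifts: X<a> with r_{X,a} : X -> X<a> of degree a,
   together with its inverse (necessarily of degree a^-1) *)
Record shifts (C : gcat) := Shifts {
  shobj : H -> gobj C -> gobj C;
  shr : forall a X, ghom C a X (shobj a X);
  shrinv : forall a X, ghom C (a^-1)%g (shobj a X) X }.

Arguments shobj {_} _ _ _.
Arguments shr {_} _ _ _.
Arguments shrinv {_} _ _ _.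

Definition is_shifts (C : gcat) (s : shifts C) : Prop :=
  forall a X,
    gcast (mulgV a) (gcomp (shr s a X) (shrinv s a X)) = gid (shobj s a X) /\
    gcast (mulVg a) (gcomp (shrinv s a X) (shr s a X)) = gid X.

Record gscat := GSCat { gsc :> gcat; gss : shifts gsc }.

Arguments gss : clear implicits.

Definition is_gscat (C : gscat) : Prop := is_gcat C /\ is_shifts (gss C).

Record gfun (C D : gcat) := GFun {
  gfo : gobj C -> gobj D;
  gfm : forall a X Y, ghom C a X Y -> ghom D a (gfo X) (gfo Y) }.

Arguments gfm {_ _} _ {_ _ _} _.

Definition is_gfun (C D : gcat) (F : gfun C D) : Prop :=
  [/\ (forall a X Y (k : R) (f f' : ghom C a X Y),
         gfm F (k *: f + f') = k *: gfm F f + gfm F f'),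
      (forall a b X Y Z (g : ghom C a Y Z) (f : ghom C b X Y),
         gfm F (gcomp g f) = gcomp (gfm F g) (gfm F f)) &
      (forall X, gfm F (gid X) = gid (gfo F X))].

Definition gfid (C : gcat) : gfun C C := @GFun C C id (fun a X Y f => f).
Definition gfcomp (C D E : gcat) (G : gfun D E) (F : gfun C D) : gfun C E :=
  @GFun C E (fun X => gfo G (gfo F X)) (fun a X Y f => gfm G (gfm F f)).

Definition gnat (C D : gcat) (F G : gfun C D) :=
  forall X, ghom D 1%g (gfo F X) (gfo G X).

Definition is_gnat (C D : gcat) (F G : gfun C D) (t : gnat F G) : Prop :=
  forall a X Y (f : ghom C a X Y),
    gcast (mulg1 a) (gcomp (gfm G f) (t X)) =
    gcast (mul1g a) (gcomp (t Y) (gfm F f)).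

Definition gnid (C D : gcat) (F : gfun C D) : gnat F F := fun X => gid (gfo F X).
Definition gnvcomp (C D : gcat) (F G K : gfun C D) (u : gnat G K) (t : gnat F G)
  : gnat F K := fun X => gcast (mulg1 1%g) (gcomp (u X) (t X)).
Definition gnhcomp (C D E : gcat) (F F' : gfun C D) (G G' : gfun D E)
  (u : gnat G G') (t : gnat F F') : gnat (gfcomp G F) (gfcomp G' F') :=
  fun X => gcast (mulg1 1%g) (gcomp (u (gfo F' X)) (gfm G (t X))).

Record lcat := LCat {
  lobj : Type;
  lhom : lobj -> lobj -> lmodType R;
  lcomp : forall X Y Z : lobj, lhom Y Z -> lhom X Y -> lhom X Z;
  lid : forall X : lobj, lhom X X }.

Arguments lhom : clear implicits.
Arguments lcomp {_ _ _ _} _ _.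

Definition is_lcat (C : lcat) : Prop :=
  [/\ (forall X Y Z (k : R) (g g' : lhom C Y Z) (f : lhom C X Y),
         lcomp (k *: g + g') f = k *: lcomp g f + lcomp g' f),
      (forall X Y Z (k : R) (g : lhom C Y Z) (f f' : lhom C X Y),
         lcomp g (k *: f + f') = k *: lcomp g f + lcomp g f'),
      (forall W X Y Z (h : lhom C Y Z) (g : lhom C X Y) (f : lhom C W X),
         lcomp h (lcomp g f) = lcomp (lcomp h g) f),
      (forall X Y (f : lhom C X Y), lcomp (lid Y) f = f) &
      (forall X Y (f : lhom C X Y), lcomp f (lid X) = f)].

Record lfun (C D : lcat) := LFun {
  lfo : lobj C -> lobj D;
  lfm : forall X Y, lhom C X Y -> lhom D (lfo X) (lfo Y) }.

Arguments lfm {_ _} _ {_ _} _.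

Definition is_lfun (C D : lcat) (F : lfun C D) : Prop :=
  [/\ (forall X Y (k : R) (f f' : lhom C X Y),
         lfm F (k *: f + f') = k *: lfm F f + lfm F f'),
      (forall X Y Z (g : lhom C Y Z) (f : lhom C X Y),
         lfm F (lcomp g f) = lcomp (lfm F g) (lfm F f)) &
      (forall X, lfm F (lid X) = lid (lfo F X))].

Definition lfid (C : lcat) : lfun C C := @LFun C C id (fun X Y f => f).
Definition lfcomp (C D E : lcat) (G : lfun D E) (F : lfun C D) : lfun C E :=
  @LFun C E (fun X => lfo G (lfo F X)) (fun X Y f => lfm G (lfm F f)).

Definition lnat (C D : lcat) (F G : lfun C D) :=
  forall X, lhom D (lfo F X) (lfo G X).

Definition is_lnat (C D : lcat) (F G : lfun C D) (t : lnat F G) : Prop :=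
  forall X Y (f : lhom C X Y), lcomp (lfm G f) (t X) = lcomp (t Y) (lfm F f).

Definition is_lnatiso (C D : lcat) (F G : lfun C D) (t : lnat F G) : Prop :=
  is_lnat t /\
  forall X, exists g : lhom D (lfo G X) (lfo F X),
    lcomp g (t X) = lid (lfo F X) /\ lcomp (t X) g = lid (lfo G X).

Definition is_autoequiv (C : lcat) (F : lfun C C) : Prop :=
  exists G : lfun C C, is_lfun G /\
    (exists t : lnat (lfid C) (lfcomp G F), is_lnatiso t) /\
    (exists t : lnat (lfid C) (lfcomp F G), is_lnatiso t).

(* H-module category (C, alpha); eps, mu are given together with their
   (necessarily unique) inverses *)
Record mcat := MCat {
  mc : lcat;
  mact : H -> lfun mc mc;
  meps : lnat (lfid mc) (mact 1%g);
  mepsinv : lnat (mact 1%g) (lfid mc);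
  mmu : forall a b, lnat (lfcomp (mact a) (mact b)) (mact (a * b)%g);
  mmuinv : forall a b, lnat (mact (a * b)%g) (lfcomp (mact a) (mact b)) }.

Arguments mc : clear implicits.
Arguments mact : clear implicits.
Arguments meps : clear implicits.
Arguments mepsinv : clear implicits.
Arguments mmu : clear implicits.
Arguments mmuinv : clear implicits.

Definition mtr (M : mcat) (Z X : lobj (mc M)) (k k' : H) (e : k = k')
  (f : lhom (mc M) Z (lfo (mact M k) X)) : lhom (mc M) Z (lfo (mact M k') X) :=
  eq_rect k (fun j => lhom (mc M) Z (lfo (mact M j) X)) f k' e.

Definition is_mcat (M : mcat) : Prop :=
  (is_lcat (mc M) /\
      (forall h, is_lfun (mact M h) /\ is_autoequiv (mact M h)) /\
      is_lnat (meps M) /\ is_lnat (mepsinv M) /\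
      (forall a b, is_lnat (mmu M a b) /\ is_lnat (mmuinv M a b)) /\
      (forall X, lcomp (mepsinv M X) (meps M X) = lid X /\
                 lcomp (meps M X) (mepsinv M X) = lid (lfo (mact M 1%g) X)) /\
      (forall a b X, lcomp (mmuinv M a b X) (mmu M a b X)
                       = lid (lfo (mact M a) (lfo (mact M b) X)) /\
                     lcomp (mmu M a b X) (mmuinv M a b X)
                       = lid (lfo (mact M (a * b)%g) X)) /\
      (forall h X,
         lcomp (mmu M 1%g h X) (meps M (lfo (mact M h) X))
         = mtr (esym (mul1g h)) (lid (lfo (mact M h) X)) /\
         lcomp (mmu M h 1%g X) (lfm (mact M h) (meps M X))
         = mtr (esym (mulg1 h)) (lid (lfo (mact M h) X))) /\
      (forall a b c X,
         lcomp (mmu M (a * b)%g c X) (mmu M a b (lfo (mact M c) X))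
         = mtr (mulgA a b c)
             (lcomp (mmu M a (b * c)%g X) (lfm (mact M a) (mmu M b c X))))).

Record mfun (M N : mcat) := MFun {
  mf : lfun (mc M) (mc N);
  ms : forall h, lnat (lfcomp (mact N h) mf) (lfcomp mf (mact M h)) }.

Arguments mf {_ _} _.
Arguments ms {_ _} _ _ _.

Definition is_mfun (M N : mcat) (F : mfun M N) : Prop :=
  [/\ is_lfun (mf F),
      (forall h, is_lnatiso (ms F h)),
      (forall X, lcomp (ms F 1%g X) (meps N (lfo (mf F) X))
                 = lfm (mf F) (meps M X)) &
      (forall a b X,
         lcomp (lfm (mf F) (mmu M a b X))
               (lcomp (ms F a (lfo (mact M b) X)) (lfm (mact N a) (ms F b X)))
         = lcomp (ms F (a * b)%g X) (mmu N a b (lfo (mf F) X)))].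

Definition mfid (M : mcat) : mfun M M :=
  @MFun M M (lfid (mc M)) (fun h X => lid (lfo (mact M h) X)).
Definition mfcomp (M N P : mcat) (E : mfun N P) (F : mfun M N) : mfun M P :=
  @MFun M P (lfcomp (mf E) (mf F))
    (fun h X => lcomp (lfm (mf E) (ms F h X)) (ms E h (lfo (mf F) X))).

Definition mnat (M N : mcat) (E F : mfun M N) := lnat (mf E) (mf F).

Definition is_mnat (M N : mcat) (E F : mfun M N) (t : mnat E F) : Prop :=
  is_lnat t /\
  forall h X, lcomp (t (lfo (mact M h) X)) (ms E h X)
              = lcomp (ms F h X) (lfm (mact N h) (t X)).

Definition mnid (M N : mcat) (F : mfun M N) : mnat F F :=
  fun X => lid (lfo (mf F) X).
Definition mnvcomp (M N : mcat) (E F G : mfun M N) (u : mnat F G) (t : mnat E F)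
  : mnat E G := fun X => lcomp (u X) (t X).
Definition mnhcomp (M N P : mcat) (F F' : mfun M N) (G G' : mfun N P)
  (u : mnat G G') (t : mnat F F') : mnat (mfcomp G F) (mfcomp G' F') :=
  fun X => lcomp (u (lfo (mf F') X)) (lfm (mf G) (t X)).

(*  The 2-functor (-)^1 : Cat^{H,shifts} -> ModCat_H                   *)
Definition one_lcat (C : gscat) : lcat :=
  @LCat (gobj C) (fun X Y => ghom C 1%g X Y)
    (fun X Y Z g f => gcast (mulg1 1%g) (gcomp g f)) (fun X => gid X).

Definition one_act (C : gscat) (a : H) : lfun (one_lcat C) (one_lcat C) :=
  @LFun (one_lcat C) (one_lcat C) (shobj (gss C) a)
    (fun X Y f => gcast (deg_conj a)
        (gcomp (gcomp (shr (gss C) a Y) f) (shrinv (gss C) a X))).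

Definition one_obj (C : gscat) : mcat :=
  @MCat (one_lcat C) (one_act C)
    (fun X => shr (gss C) 1%g X)
    (fun X => gcast (@invg1 H) (shrinv (gss C) 1%g X))
    (fun a b X => gcast (deg_mu a b)
        (gcomp (gcomp (shr (gss C) (a * b)%g X) (shrinv (gss C) b X))
               (shrinv (gss C) a (shobj (gss C) b X))))
    (fun a b X => gcast (mulgV (a * b)%g)
        (gcomp (gcomp (shr (gss C) a (shobj (gss C) b X)) (shr (gss C) b X))
               (shrinv (gss C) (a * b)%g X))).

Definition one_fun (C D : gscat) (F : gfun C D) : mfun (one_obj C) (one_obj D) :=
  @MFun (one_obj C) (one_obj D)
    (@LFun (one_lcat C) (one_lcat D) (gfo F) (fun X Y f => gfm F f))
    (fun a X => gcast (mulgV a)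
        (gcomp (gfm F (shr (gss C) a X)) (shrinv (gss D) a (gfo F X)))).

Definition one_nat (C D : gscat) (F G : gfun C D) (t : gnat F G)
  : mnat (one_fun F) (one_fun G) := t.

(*  The 2-functor (-)^bullet : ModCat_H -> Cat^{H,shifts}              *)
Definition bul_gcat (M : mcat) : gcat :=
  @GCat (lobj (mc M)) (fun h X Y => lhom (mc M) (lfo (mact M h) X) Y)
    (fun a b X Y Z f' f =>
       lcomp f' (lcomp (lfm (mact M a) f) (mmuinv M a b X)))
    (fun X => mepsinv M X).

Definition bul_shifts (M : mcat) : shifts (bul_gcat M) :=
  @Shifts (bul_gcat M) (fun a X => lfo (mact M a) X)
    (fun a X => lid (lfo (mact M a) X))
    (fun a X => lcomp (mepsinv M X) (mtr (mulVg a) (mmu M (a^-1)%g a X))).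

Definition bul_obj (M : mcat) : gscat := @GSCat (bul_gcat M) (bul_shifts M).

Definition bul_fun (M N : mcat) (F : mfun M N) : gfun (bul_obj M) (bul_obj N) :=
  @GFun (bul_gcat M) (bul_gcat N) (lfo (mf F))
    (fun a X Y f => lcomp (lfm (mf F) f) (ms F a X)).

Definition bul_nat (M N : mcat) (E F : mfun M N) (t : mnat E F)
  : gnat (bul_fun E) (bul_fun F) :=
  fun X => lcomp (t X) (mepsinv N (lfo (mf E) X)).

Definition nu_comp (M : mcat) : mfun (one_obj (bul_obj M)) M :=
  @MFun (one_obj (bul_obj M)) M
    (@LFun (one_lcat (bul_obj M)) (mc M) id
       (fun X Y (f : lhom (mc M) (lfo (mact M 1%g) X) Y) => lcomp f (meps M X)))
    (fun h X => lid (lfo (mact M h) X)).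

Definition eta_comp (C : gscat) : gfun (bul_obj (one_obj C)) C :=
  @GFun (bul_gcat (one_obj C)) C id
    (fun h X Y (f : ghom C 1%g (shobj (gss C) h X) Y) =>
       gcast (mul1g h) (gcomp f (shr (gss C) h X))).

Definition one_is_2functor : Prop :=
  ((forall C : gscat, is_gscat C -> is_mcat (one_obj C)) /\
      (forall (C D : gscat) (F : gfun C D), is_gscat C -> is_gscat D ->
         is_gfun F -> is_mfun (one_fun F)) /\
      (forall (C D : gscat) (F G : gfun C D) (t : gnat F G),
         is_gscat C -> is_gscat D -> is_gfun F -> is_gfun G -> is_gnat t ->
         is_mnat (one_nat t)) /\
      (forall C : gscat, is_gscat C -> one_fun (gfid C) = mfid (one_obj C)) /\
      (forall (C D E : gscat) (F : gfun C D) (G : gfun D E),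
         is_gscat C -> is_gscat D -> is_gscat E -> is_gfun F -> is_gfun G ->
         one_fun (gfcomp G F) = mfcomp (one_fun G) (one_fun F)) /\
      (forall (C D : gscat) (F : gfun C D),
         is_gscat C -> is_gscat D -> is_gfun F ->
         one_nat (gnid F) = mnid (one_fun F)) /\
      (forall (C D : gscat) (F G K : gfun C D) (t : gnat F G) (u : gnat G K),
         is_gscat C -> is_gscat D -> is_gfun F -> is_gfun G -> is_gfun K ->
         is_gnat t -> is_gnat u ->
         one_nat (gnvcomp u t) = mnvcomp (one_nat u) (one_nat t)) /\
      (forall (C D E : gscat) (F F' : gfun C D) (G G' : gfun D E)
              (t : gnat F F') (u : gnat G G'),
         is_gscat C -> is_gscat D -> is_gscat E ->
         is_gfun F -> is_gfun F' -> is_gfun G -> is_gfun G' ->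
         is_gnat t -> is_gnat u ->
         one_nat (gnhcomp u t) = mnhcomp (one_nat u) (one_nat t))).

Definition bul_is_2functor : Prop :=
  ((forall M : mcat, is_mcat M -> is_gscat (bul_obj M)) /\
      (forall (M N : mcat) (F : mfun M N), is_mcat M -> is_mcat N ->
         is_mfun F -> is_gfun (bul_fun F)) /\
      (forall (M N : mcat) (E F : mfun M N) (t : mnat E F),
         is_mcat M -> is_mcat N -> is_mfun E -> is_mfun F -> is_mnat t ->
         is_gnat (bul_nat t)) /\
      (forall M : mcat, is_mcat M -> bul_fun (mfid M) = gfid (bul_obj M)) /\
      (forall (M N P : mcat) (F : mfun M N) (G : mfun N P),
         is_mcat M -> is_mcat N -> is_mcat P -> is_mfun F -> is_mfun G ->
         bul_fun (mfcomp G F) = gfcomp (bul_fun G) (bul_fun F)) /\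
      (forall (M N : mcat) (F : mfun M N),
         is_mcat M -> is_mcat N -> is_mfun F ->
         bul_nat (mnid F) = gnid (bul_fun F)) /\
      (forall (M N : mcat) (E F G : mfun M N) (t : mnat E F) (u : mnat F G),
         is_mcat M -> is_mcat N -> is_mfun E -> is_mfun F -> is_mfun G ->
         is_mnat t -> is_mnat u ->
         bul_nat (mnvcomp u t) = gnvcomp (bul_nat u) (bul_nat t)) /\
      (forall (M N P : mcat) (F F' : mfun M N) (G G' : mfun N P)
              (t : mnat F F') (u : mnat G G'),
         is_mcat M -> is_mcat N -> is_mcat P ->
         is_mfun F -> is_mfun F' -> is_mfun G -> is_mfun G' ->
         is_mnat t -> is_mnat u ->
         bul_nat (mnhcomp u t) = gnhcomp (bul_nat u) (bul_nat t))).

Definition nu_is_2natiso : Prop :=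
  [/\ (forall M : mcat, is_mcat M -> is_mfun (nu_comp M)),
      (forall M : mcat, is_mcat M ->
         exists G : mfun M (one_obj (bul_obj M)),
           [/\ is_mfun G, mfcomp (nu_comp M) G = mfid M &
               mfcomp G (nu_comp M) = mfid (one_obj (bul_obj M))]),
      (forall (M N : mcat) (F : mfun M N),
         is_mcat M -> is_mcat N -> is_mfun F ->
         mfcomp (nu_comp N) (one_fun (bul_fun F)) = mfcomp F (nu_comp M)) &
      (forall (M N : mcat) (E F : mfun M N) (t : mnat E F),
         is_mcat M -> is_mcat N -> is_mfun E -> is_mfun F -> is_mnat t ->
         mnhcomp (mnid (nu_comp N)) (one_nat (bul_nat t))
         = mnhcomp t (mnid (nu_comp M)))].

Definition eta_is_2natiso : Prop :=
  [/\ (forall C : gscat, is_gscat C -> is_gfun (eta_comp C)),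
      (forall C : gscat, is_gscat C ->
         exists G : gfun C (bul_obj (one_obj C)),
           [/\ is_gfun G, gfcomp (eta_comp C) G = gfid C &
               gfcomp G (eta_comp C) = gfid (bul_obj (one_obj C))]),
      (forall (C D : gscat) (F : gfun C D),
         is_gscat C -> is_gscat D -> is_gfun F ->
         gfcomp (eta_comp D) (bul_fun (one_fun F)) = gfcomp F (eta_comp C)) &
      (forall (C D : gscat) (F G : gfun C D) (t : gnat F G),
         is_gscat C -> is_gscat D -> is_gfun F -> is_gfun G -> is_gnat t ->
         gnhcomp (gnid (eta_comp D)) (bul_nat (one_nat t))
         = gnhcomp t (gnid (eta_comp C)))].

End Defs.

(* Main.v *)
Require Import Defs.
From HB Require Import structures.
From mathcomp Require Import all_boot all_algebra monoid.
Import Defs.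
From Stdlib Require Import ClassicalEpsilon ProofIrrelevance Eqdep FunctionalExtensionality.
Set Implicit Arguments. Unset Strict Implicit. Unset Printing Implicit Defensive.

Import GRing.Theory.
Local Open Scope ring_scope.
Section W.
Variable R : comNzRingType.

Section TL.
Variable C : lcat R.
Definition LMor := {p : lobj C * lobj C & lhom (l:=C) p.1 p.2}.
Definition lmk (X Y : lobj C) (f : lhom (l:=C) X Y) : LMor :=
  existT (fun p : lobj C * lobj C => lhom (l:=C) p.1 p.2) (X, Y) f.
Definition lsrc (m : LMor) := (projT1 m).1.
Definition ltgt (m : LMor) := (projT1 m).2.
Definition lmc (g f : LMor) : LMor :=
  match excluded_middle_informative (ltgt f = lsrc g) with
  | left e => lmk (lcomp (projT2 g)
        (eq_rect _ (fun Y => lhom (l:=C) (lsrc f) Y) (projT2 f) _ e))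
  | right _ => f end.

Lemma lmcE X Y Z (g : lhom (l:=C) Y Z) (f : lhom (l:=C) X Y) :
  lmk (lcomp g f) = lmc (lmk g) (lmk f).
Proof.
rewrite /lmc; case: excluded_middle_informative => [e|n]; last by case: n.
by rewrite (proof_irrelevance _ e erefl).
Qed.

Lemma lmk_inj X Y (f g : lhom (l:=C) X Y) : lmk f = lmk g -> f = g.
Proof. exact: inj_pair2. Qed.

Lemma lsrc_mk X Y (f : lhom (l:=C) X Y) : lsrc (lmk f) = X.
Proof. by []. Qed.
Lemma ltgt_mk X Y (f : lhom (l:=C) X Y) : ltgt (lmk f) = Y.
Proof. by []. Qed.
Lemma lsrc_mc (g f : LMor) : lsrc (lmc g f) = lsrc f.
Proof. by rewrite /lmc; case: excluded_middle_informative. Qed.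
Lemma ltgt_mc (g f : LMor) : ltgt f = lsrc g -> ltgt (lmc g f) = ltgt g.
Proof. by rewrite /lmc; case: excluded_middle_informative. Qed.

Hypothesis HC : is_lcat C.

Lemma lmcA (f g h : LMor) : ltgt f = lsrc g -> ltgt g = lsrc h ->
  lmc h (lmc g f) = lmc (lmc h g) f.
Proof.
case: f => [[X Y] f]; case: g => [[Y' Z] g]; case: h => [[Z' W] h] /=.
rewrite /ltgt /lsrc /= => e1 e2; subst.
rewrite -!lmcE. case: HC => _ _ A _ _. by rewrite A.
Qed.
Lemma lidl' Y (f : LMor) : ltgt f = Y -> lmc (lmk (lid Y)) f = f.
Proof. move=> <-. case: f => [[X Y'] f]; rewrite /ltgt /= -lmcE. case: HC => _ _ _ U _.
by rewrite U.
Qed.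
Lemma lidr' X (f : LMor) : lsrc f = X -> lmc f (lmk (lid X)) = f.
Proof. move=> <-. case: f => [[X' Y] f]; rewrite /lsrc /= -lmcE. case: HC => _ _ _ _ U.
by rewrite U.
Qed.
Lemma lpair (x y z rest : LMor) : lmc x y = z ->
  ltgt rest = lsrc y -> ltgt y = lsrc x -> lmc x (lmc y rest) = lmc z rest.
Proof. move=> <- e1 e2. by rewrite lmcA. Qed.
Lemma ltrail (A B : LMor) : lsrc A = lsrc B ->
  lmc A (lmk (lid (lsrc A))) = lmc B (lmk (lid (lsrc B))) -> A = B.
Proof. move=> e. by rewrite lidr' // lidr'. Qed.
Lemma linv (u ui v vi : LMor) : lmc ui u = lmk (lid (lsrc u)) ->
  lmc v vi = lmk (lid (ltgt v)) -> u = v ->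
  ltgt u = lsrc ui -> ltgt vi = lsrc v -> lsrc ui = ltgt v -> ltgt vi = lsrc u -> ui = vi.
Proof.
move=> E1 E2 e c1 c2 c3 c4.
transitivity (lmc ui (lmc v vi)); first by rewrite E2 lidr'.
have c5 : ltgt v = lsrc ui by rewrite -e.
by rewrite (lmcA c2 c5) -e E1 lidl'.
Qed.
Lemma lidl (f : LMor) : lmc (lmk (lid (ltgt f))) f = f.
Proof.
case: f => [[X Y] f]; rewrite /ltgt /= -lmcE. case: HC => _ _ _ U _. by rewrite U.
Qed.
Lemma lidr (f : LMor) : lmc f (lmk (lid (lsrc f))) = f.
Proof.
case: f => [[X Y] f]; rewrite /lsrc /= -lmcE. case: HC => _ _ _ _ U. by rewrite U.
Qed.
End TL.

Section TLF.
Variables (C D : lcat R) (F : lfun C D).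
Definition lFm (m : LMor C) : LMor D := lmk (lfm F (projT2 m)).
Lemma lsrc_Fm (m : LMor C) : lsrc (lFm m) = lfo F (lsrc m).
Proof. by []. Qed.
Lemma ltgt_Fm (m : LMor C) : ltgt (lFm m) = lfo F (ltgt m).
Proof. by []. Qed.
Lemma lfmE X Y (f : lhom (l:=C) X Y) : lmk (lfm F f) = lFm (lmk f).
Proof. by []. Qed.
Hypothesis HF : is_lfun F.
Lemma lFmC (g f : LMor C) : ltgt f = lsrc g -> lFm (lmc g f) = lmc (lFm g) (lFm f).
Proof.
case: f => [[X Y] f]; case: g => [[Y' Z] g]; rewrite /ltgt /lsrc /= => e; subst.
rewrite -lmcE /lFm /= -lmcE. case: HF => _ ->. by [].
Qed.
Lemma lFmP (x y z : LMor C) : lmc x y = z -> ltgt y = lsrc x ->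
  lmc (lFm x) (lFm y) = lFm z.
Proof. by move=> <- e; rewrite lFmC. Qed.
Lemma lFmI X : lFm (lmk (lid X)) = lmk (lid (lfo F X)).
Proof. rewrite /lFm /=. case: HF => _ _ ->. by []. Qed.
End TLF.

Variable H : groupType.

Section TG.
Variable C : gcat R H.
Definition GMor := {p : gobj C * gobj C * H & ghom (g:=C) p.2 p.1.1 p.1.2}.
Definition gmk (X Y : gobj C) (h : H) (f : ghom (g:=C) h X Y) : GMor :=
  existT (fun p : gobj C * gobj C * H => ghom (g:=C) p.2 p.1.1 p.1.2) (X, Y, h) f.
Definition gsrc (m : GMor) := (projT1 m).1.1.
Definition gtgt (m : GMor) := (projT1 m).1.2.
Definition gmc (g f : GMor) : GMor :=
  match excluded_middle_informative (gtgt f = gsrc g) with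
  | left e => gmk (gcomp (projT2 g)
        (eq_rect _ (fun Y => ghom (g:=C) (projT1 f).2 (gsrc f) Y) (projT2 f) _ e))
  | right _ => f end.

Lemma gmcE a b X Y Z (g : ghom (g:=C) a Y Z) (f : ghom (g:=C) b X Y) :
  gmk (gcomp g f) = gmc (gmk g) (gmk f).
Proof.
rewrite /gmc; case: excluded_middle_informative => [e|n]; last by case: n.
by rewrite (proof_irrelevance _ e erefl).
Qed.

Lemma gmk_inj a X Y (f g : ghom (g:=C) a X Y) : gmk f = gmk g -> f = g.
Proof. exact: inj_pair2. Qed.

Lemma gcastE a b X Y (e : a = b) (f : ghom (g:=C) a X Y) : gmk (gcast e f) = gmk f.
Proof. by case: b / e. Qed.

Lemma gsrc_mc (g f : GMor) : gsrc (gmc g f) = gsrc f.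
Proof. by rewrite /gmc; case: excluded_middle_informative. Qed.
Lemma gtgt_mc (g f : GMor) : gtgt f = gsrc g -> gtgt (gmc g f) = gtgt g.
Proof. by rewrite /gmc; case: excluded_middle_informative. Qed.

Lemma gcastL a b X Y (e : a = b) (k : R) (f g : ghom (g:=C) a X Y) :
  gcast e (k *: f + g) = k *: gcast e f + gcast e g.
Proof. by case: b / e. Qed.

Hypothesis HC : is_gcat C.

Lemma gmcA (f g h : GMor) : gtgt f = gsrc g -> gtgt g = gsrc h ->
  gmc h (gmc g f) = gmc (gmc h g) f.
Proof.
case: f => [[[X Y] a] f]; case: g => [[[Y' Z] b] g]; case: h => [[[Z' W] c] h] /=.
rewrite /gtgt /gsrc /= => e1 e2; subst.
rewrite -!gmcE. case: HC => _ _ A _ _. rewrite A. exact: gcastE.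
Qed.
Lemma gidl' Y (f : GMor) : gtgt f = Y -> gmc (gmk (gid Y)) f = f.
Proof. move=> <-. case: f => [[[X Y'] a] f]; rewrite /gtgt /= -gmcE. case: HC => _ _ _ U _.
by rewrite -[in RHS](U _ _ _ f); exact: esym (gcastE _ _).
Qed.
Lemma gidr' X (f : GMor) : gsrc f = X -> gmc f (gmk (gid X)) = f.
Proof. move=> <-. case: f => [[[X' Y] a] f]; rewrite /gsrc /= -gmcE. case: HC => _ _ _ _ U.
by rewrite -[in RHS](U _ _ _ f); exact: esym (gcastE _ _).
Qed.
Lemma gcanc (x y rest : GMor) Z : gmc x y = gmk (gid Z) ->
  gtgt rest = gsrc y -> gtgt y = gsrc x -> gtgt rest = Z -> gmc x (gmc y rest) = rest.
Proof. move=> E e1 e2 e3. by rewrite gmcA // E gidl'. Qed.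
Lemma gidl (f : GMor) : gmc (gmk (gid (gtgt f))) f = f.
Proof.
case: f => [[[X Y] a] f]; rewrite /gtgt /= -gmcE. case: HC => _ _ _ U _.
rewrite -[in RHS](U _ _ _ f). exact: esym (gcastE _ _).
Qed.
Lemma gidr (f : GMor) : gmc f (gmk (gid (gsrc f))) = f.
Proof.
case: f => [[[X Y] a] f]; rewrite /gsrc /= -gmcE. case: HC => _ _ _ _ U.
rewrite -[in RHS](U _ _ _ f). exact: esym (gcastE _ _).
Qed.
End TG.

Section TGF.
Variables (C D : gcat R H) (F : gfun C D).
Definition gFm (m : GMor C) : GMor D := gmk (gfm F (projT2 m)).
Lemma gfmE a X Y (f : ghom (g:=C) a X Y) : gmk (gfm F f) = gFm (gmk f).
Proof. by []. Qed.
Hypothesis HF : is_gfun F.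
Lemma gFmC (g f : GMor C) : gtgt f = gsrc g -> gFm (gmc g f) = gmc (gFm g) (gFm f).
Proof.
case: f => [[[X Y] a] f]; case: g => [[[Y' Z] b] g]; rewrite /gtgt /gsrc /= => e; subst.
rewrite -gmcE /gFm /= -gmcE. case: HF => _ ->. by [].
Qed.
Lemma gFmI X : gFm (gmk (gid X)) = gmk (gid (gfo F X)).
Proof. rewrite /gFm /=. case: HF => _ _ ->. by []. Qed.
Lemma gfm_cast a b X Y (e : a = b) (f : ghom (g:=C) a X Y) :
  gfm F (gcast e f) = gcast e (gfm F f).
Proof. by case: b / e. Qed.
End TGF.

Lemma gmc2 (C : gcat R H) (x y z r : GMor C) : gmc x y = z ->
  gtgt r = gsrc y -> gtgt y = gsrc x -> is_gcat C -> gmc x (gmc y r) = gmc z r.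
Proof. by move=> <- e1 e2 HC; rewrite gmcA. Qed.

Ltac gsc := rewrite ?gsrc_mc; first [ done | rewrite gtgt_mc; [gsc | gsc] ].
Ltac gscOLD := rewrite ?gsrc_mc; first [ done | rewrite gtgt_mc; [gsc | gsc] ].
Ltac gunf := rewrite ?(gcastE, gmcE, gfmE).
Ltac gnorm HC := gunf; repeat (rewrite -(gmcA HC); [|gsc|gsc]).

Section ShC.
Variable C : gscat R H.
Hypothesis HC : is_gscat C.
Let HG : is_gcat C := proj1 HC.
Notation r := (shr (gss C)).
Notation ri := (shrinv (gss C)).

Lemma shK1 a X : gmc (gmk (r a X)) (gmk (ri a X)) = gmk (gid (shobj (gss C) a X)).
Proof. case: HC => _ /(_ a X) [<- _]. by rewrite gcastE gmcE. Qed.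
Lemma shK2 a X : gmc (gmk (ri a X)) (gmk (r a X)) = gmk (gid X).
Proof. case: HC => _ /(_ a X) [_ <-]. by rewrite gcastE gmcE. Qed.

Lemma gc1 a X (rest : GMor C) : gtgt rest = shobj (gss C) a X ->
  gmc (gmk (r a X)) (gmc (gmk (ri a X)) rest) = rest.
Proof. move=> e. by apply: (gcanc HG (shK1 a X)). Qed.
Lemma gc2 a X (rest : GMor C) : gtgt rest = X ->
  gmc (gmk (ri a X)) (gmc (gmk (r a X)) rest) = rest.
Proof. move=> e. by apply: (gcanc HG (shK2 a X)). Qed.

Variables (D : gcat R H) (F : gfun C D).
Hypothesis HD : is_gcat D.
Hypothesis HF : is_gfun F.
Lemma FshK1 a X : gmc (gFm F (gmk (r a X))) (gFm F (gmk (ri a X))) =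
   gmk (gid (gfo F (shobj (gss C) a X))).
Proof. by rewrite -gFmC // shK1 gFmI. Qed.
Lemma FshK2 a X : gmc (gFm F (gmk (ri a X))) (gFm F (gmk (r a X))) = gmk (gid (gfo F X)).
Proof. by rewrite -gFmC // shK2 gFmI. Qed.
Lemma Fgc1 a X (rest : GMor D) : gtgt rest = gfo F (shobj (gss C) a X) ->
  gmc (gFm F (gmk (r a X))) (gmc (gFm F (gmk (ri a X))) rest) = rest.
Proof. move=> e. by apply: (gcanc HD (FshK1 a X)). Qed.
Lemma Fgc2 a X (rest : GMor D) : gtgt rest = gfo F X ->
  gmc (gFm F (gmk (ri a X))) (gmc (gFm F (gmk (r a X))) rest) = rest.
Proof. move=> e. by apply: (gcanc HD (FshK2 a X)). Qed.
End ShC.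

Ltac isg := first [assumption | apply: proj1; assumption].
Ltac gstep := first [ rewrite gc1; [|assumption|gsc] | rewrite gc2; [|assumption|gsc]
  | rewrite shK1; [|assumption] | rewrite shK2; [|assumption]
  | rewrite Fgc1; [|assumption|isg|assumption|gsc] | rewrite Fgc2; [|assumption|isg|assumption|gsc]
  | rewrite FshK1; [|assumption|assumption] | rewrite FshK2; [|assumption|assumption]
  | rewrite gidl'; [|isg|gsc] | rewrite gidr'; [|isg|gsc] ].
Ltac gdist := repeat (rewrite gFmC; [|assumption|gsc]); repeat (rewrite gFmI; [|assumption]).
Ltac gsolve := gunf; gdist; repeat (rewrite -gmcA; [|isg|gsc|gsc]); repeat gstep; try done.

Section OneC.
Variable C : gscat R H.
Hypothesis HC : is_gscat C.
Let HG : is_gcat C := proj1 HC.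
Notation r := (shr (gss C)).
Notation ri := (shrinv (gss C)).

Lemma one_lcatP : is_lcat (one_lcat C).
Proof.
case: HG => L1 L2 A U1 U2.
split => /=.
- move=> X Y Z k g g' f. by rewrite L1 gcastL.
- move=> X Y Z k g f f'. by rewrite L2 gcastL.
- move=> W X Y Z h g f. apply: gmk_inj. gnorm HG. done.
- move=> X Y f. apply: gmk_inj. gnorm HG. exact: gidl.
- move=> X Y f. apply: gmk_inj. gnorm HG. exact: gidr.
Qed.

Lemma one_actP a : is_lfun (one_act C a).
Proof.
case: HG => L1 L2 A U1 U2.
split => /=.
- move=> X Y k f f'. by rewrite L2 L1 gcastL.
- move=> X Y Z g f. apply: gmk_inj. gsolve.
- move=> X. apply: gmk_inj. gsolve.
Qed.

Lemma mtr1E (Z X : gobj C) k k' (e : k = k') (f : ghom (g:=C) 1%g Z (shobj (gss C) k X)) :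
  gmk (mtr (M:=one_obj C) e f) = gmk f.
Proof. by case: k' / e. Qed.

Lemma one_autoP a : is_autoequiv (one_act C a).
Proof.
exists (one_act C (a^-1)%g); split; first exact: one_actP.
split.
- exists (fun X => gcast (mulVg a) (gcomp (r (a^-1)%g (shobj (gss C) a X)) (r a X))).
  split.
  + move=> X Y f /=. apply: gmk_inj. gsolve.
  + move=> X. exists (gcast (mulgV (a^-1)%g) (gcomp (ri a X) (ri (a^-1)%g (shobj (gss C) a X)))).
    split; apply: gmk_inj; gsolve.
- exists (fun X => gcast (mulgV a) (gcomp (r a (shobj (gss C) (a^-1)%g X)) (r (a^-1)%g X))).
  split.
  + move=> X Y f /=. apply: gmk_inj. gsolve.
  + move=> X. exists (gcast (mulVg (a^-1)%g) (gcomp (ri (a^-1)%g X) (ri a (shobj (gss C) (a^-1)%g X)))).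
    split; apply: gmk_inj; gsolve.
Qed.

Lemma one_objP : is_mcat (one_obj C).
Proof.
split; first exact: one_lcatP.
split; first by move=> h; split; [exact: one_actP | exact: one_autoP].
split; first by move=> X Y f /=; apply: gmk_inj; gsolve.
split; first by move=> X Y f /=; apply: gmk_inj; gsolve.
split; first by move=> a b; split=> X Y f /=; apply: gmk_inj; gsolve.
split; first by move=> X; split; apply: gmk_inj; gsolve.
split; first by move=> a b X; split; apply: gmk_inj; gsolve.
split.
  move=> h X; split; apply: gmk_inj; rewrite mtr1E; gsolve.
  - by rewrite mul1g; gsolve.
  - by rewrite mulg1; gsolve.
move=> a b c X; apply: gmk_inj; rewrite mtr1E; gsolve.
by rewrite mulgA; gsolve.
Qed.
End OneC.

Lemma mfun_eq (M N : mcat R H) (o : lobj (mc M) -> lobj (mc N))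
  (m1 m2 : forall X Y, lhom (l:=mc M) X Y -> lhom (l:=mc N) (o X) (o Y)) s1 s2 :
  m1 = m2 -> (forall h X, s1 h X = s2 h X) ->
  @MFun _ _ M N (LFun m1) s1 = @MFun _ _ M N (LFun m2) s2.
Proof.
move=> E; subst => E; congr MFun.
apply: functional_extensionality_dep => h; apply: functional_extensionality_dep => X.
exact: E.
Qed.

Lemma gfun_eq (C D : gcat R H) (o : gobj C -> gobj D)
  (m1 m2 : forall a X Y, ghom (g:=C) a X Y -> ghom (g:=D) a (o X) (o Y)) :
  (forall a X Y f, m1 a X Y f = m2 a X Y f) -> GFun m1 = GFun m2.
Proof.
move=> E; congr GFun.
apply: functional_extensionality_dep => a; apply: functional_extensionality_dep => X.
apply: functional_extensionality_dep => Y; apply: functional_extensionality_dep => f.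
exact: E.
Qed.

Section OneF.
Variables (C D E : gscat R H).
Hypotheses (HC : is_gscat C) (HD : is_gscat D) (HE : is_gscat E).
Let HCg : is_gcat C := proj1 HC.
Let HDg : is_gcat D := proj1 HD.
Let HEg : is_gcat E := proj1 HE.

Lemma gnatT (F G : gfun C D) (t : gnat F G) : is_gnat t ->
  forall a X Y (f : ghom (g:=C) a X Y) (rest : GMor D), gtgt rest = gfo F X ->
  gmc (gFm G (gmk f)) (gmc (gmk (t X)) rest) = gmc (gmk (t Y)) (gmc (gFm F (gmk f)) rest).
Proof.
move=> Ht a X Y f rest e.
rewrite !gmcA //. congr gmc.
have := congr1 (fun z => gmk z) (Ht a X Y f). rewrite !gcastE => E'. rewrite -!gfmE -!gmcE. exact: E'.
Qed.

Lemma one_funP (F : gfun C D) : is_gfun F -> is_mfun (one_fun F).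
Proof.
move=> HF. split.
- split => /=.
  + by move=> X Y k f f'; case: HF => ->.
  + move=> X Y Z g f; apply: gmk_inj; gsolve.
  + by move=> X; case: HF => _ _ ->.
- move=> h; split.
  + move=> X Y f /=; apply: gmk_inj; gsolve.
  + move=> X; exists (gcast (mulgV h) (gcomp (shr (gss D) h (gfo F X)) (gfm F (shrinv (gss C) h X)))).
    split; apply: gmk_inj; gsolve.
- move=> X /=; apply: gmk_inj; gsolve.
- move=> a b X /=; apply: gmk_inj; gsolve.
Qed.

Lemma one_natP (F G : gfun C D) (t : gnat F G) : is_gfun F -> is_gfun G -> is_gnat t ->
  is_mnat (one_nat t).
Proof.
move=> HF HG Ht; split.
- move=> X Y f /=; apply: gmk_inj.
  have := congr1 (fun z => gmk z) (Ht 1%g X Y f). rewrite !gcastE => E'.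
  exact: E'.
- move=> h X /=; apply: gmk_inj; gsolve.
  rewrite /one_nat -(gnatT Ht) //; gsolve.
Qed.

Lemma one_fidP : Defs.one_fun (gfid C) = mfid (one_obj C).
Proof.
rewrite /Defs.one_fun /mfid /lfid /=. apply: mfun_eq => // h X. apply: gmk_inj; gsolve.
Qed.

Lemma one_fcompP (F : gfun C D) (G : gfun D E) : is_gfun F -> is_gfun G ->
  Defs.one_fun (gfcomp G F) = mfcomp (Defs.one_fun G) (Defs.one_fun F).
Proof.
move=> HF HG.
rewrite /Defs.one_fun /mfcomp /lfcomp /=. apply: mfun_eq => // h X. apply: gmk_inj; gsolve.
Qed.

Lemma eta_funP : is_gfun (eta_comp C).
Proof.
case: HCg => L1 L2 A U1 U2.
split => /=.
- move=> a X Y k f f'. by rewrite L1 gcastL.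
- move=> a b X Y Z g f; apply: gmk_inj; gsolve.
- move=> X; apply: gmk_inj; gsolve.
Qed.

Definition eta_inv : gfun C (bul_obj (one_obj C)) :=
  @GFun _ _ C (bul_gcat (one_obj C)) id
    (fun h X Y (f : ghom (g:=C) h X Y) => gcast (mulgV h) (gcomp f (shrinv (gss C) h X))).

Lemma eta_invP : is_gfun eta_inv.
Proof.
case: HCg => L1 L2 A U1 U2.
split => /=.
- move=> a X Y k f f'. by rewrite L1 gcastL.
- move=> a b X Y Z g f; apply: gmk_inj; gsolve.
- move=> X; apply: gmk_inj; gsolve.
Qed.

Lemma eta_iso : exists G : gfun C (bul_obj (one_obj C)),
  [/\ is_gfun G, gfcomp (eta_comp C) G = gfid C &
      gfcomp G (eta_comp C) = gfid (bul_obj (one_obj C))].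
Proof.
exists eta_inv; split; first exact: eta_invP.
- apply: gfun_eq => a X Y f /=; apply: gmk_inj; gsolve.
- apply: gfun_eq => a X Y f /=; apply: gmk_inj; gsolve.
Qed.

Lemma eta_natP (F : gfun C D) : is_gfun F ->
  gfcomp (eta_comp D) (bul_fun (Defs.one_fun F)) = gfcomp F (eta_comp C).
Proof.
move=> HF. apply: gfun_eq => a X Y f /=; apply: gmk_inj; gsolve.
Qed.

Lemma eta_2natP (F G : gfun C D) (t : gnat F G) : is_gfun F -> is_gfun G -> is_gnat t ->
  gnhcomp (gnid (eta_comp D)) (bul_nat (one_nat t)) = gnhcomp t (gnid (eta_comp C)).
Proof.
move=> HF HG Ht. apply: functional_extensionality_dep => X.
rewrite /gnhcomp /gnid /bul_nat /one_nat /=. apply: gmk_inj; gsolve.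
Qed.
End OneF.
Ltac grp := solve [ rewrite /lsrc /ltgt /lFm /lmk; cbn [projT1 fst snd];
  do 3 rewrite ?mulgA ?mulg1 ?mul1g ?mulgV ?mulVg ?mulgK ?invg1; first [done | reflexivity] ].
Ltac lsc := rewrite ?(lsrc_mc, lsrc_Fm, ltgt_Fm); first [ done | reflexivity | rewrite ltgt_mc; [lsc | lsc] | grp ].

Lemma HL (M : mcat R H) : is_mcat M -> is_lcat (mc M). Proof. by case. Qed.
Lemma HA (M : mcat R H) : is_mcat M -> forall h, is_lfun (mact M h).
Proof. by case => _ [+ _] h => /(_ h) []. Qed.
Lemma lmtrE (M : mcat R H) (Z X : lobj (mc M)) k k' (e : k = k') (f : lhom (l:=mc M) Z (lfo (mact M k) X)) :
  lmk (mtr e f) = lmk f.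
Proof. by case: k' / e. Qed.
Lemma lgcE (M : mcat R H) a b (X Y : lobj (mc M)) (e : a = b) (f : lhom (l:=mc M) (lfo (mact M a) X) Y) :
  lmk (gcast (C:=bul_gcat M) e f) = lmk f.
Proof. by case: b / e. Qed.

Lemma mfL (M N : mcat R H) (F : mfun M N) : is_mfun F -> is_lfun (mf F).
Proof. by case. Qed.
Ltac isf := first [ assumption | apply: HA; assumption | apply: mfL; assumption ].
Ltac lunf := rewrite ?(lmcE, lfmE, lmtrE, lgcE).
Ltac ldist := repeat (rewrite lFmC; [|isf|lsc]); repeat (rewrite lFmI; [|isf]).
Ltac lra HC := repeat (rewrite -(lmcA HC); [|lsc|lsc]).
Ltac lnorm HC := lunf; ldist; lra HC.
Ltac lp HC E := first [ rewrite (lpair HC E); [|lsc|lsc] | rewrite E ]; lra HC.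

Section MW.
Variable M : mcat R H.
Hypothesis HM : is_mcat M.
Notation A k m := (lFm (mact M k) m).
Notation e_ := (@meps _ _ M).
Notation ei := (@mepsinv _ _ M).
Notation mu := (@mmu _ _ M).
Notation mi := (@mmuinv _ _ M).
Notation al k X := (lfo (mact M k) X).


Lemma eK1 X : lmc (lmk (ei X)) (lmk (e_ X)) = lmk (lid X).
Proof. case: HM => _ [_ [_ [_ [_ [/(_ X) [E _] _]]]]]. by rewrite -lmcE E. Qed.
Lemma eK2 X : lmc (lmk (e_ X)) (lmk (ei X)) = lmk (lid (al 1%g X)).
Proof. case: HM => _ [_ [_ [_ [_ [/(_ X) [_ E] _]]]]]. by rewrite -lmcE E. Qed.
Lemma mK1 a b X : lmc (lmk (mi a b X)) (lmk (mu a b X)) = lmk (lid (al a (al b X))).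
Proof. case: HM => _ [_ [_ [_ [_ [_ [/(_ a b X) [E _] _]]]]]]. by rewrite -lmcE E. Qed.
Lemma mK2 a b X : lmc (lmk (mu a b X)) (lmk (mi a b X)) = lmk (lid (al (a * b)%g X)).
Proof. case: HM => _ [_ [_ [_ [_ [_ [/(_ a b X) [_ E] _]]]]]]. by rewrite -lmcE E. Qed.
Lemma eN X Y (f : lhom (l:=mc M) X Y) :
  lmc (A 1%g (lmk f)) (lmk (e_ X)) = lmc (lmk (e_ Y)) (lmk f).
Proof. case: HM => _ [_ [E _]]. by rewrite /lFm /= -!lmcE E. Qed.
Lemma eiN X Y (f : lhom (l:=mc M) X Y) :
  lmc (lmk (ei Y)) (A 1%g (lmk f)) = lmc (lmk f) (lmk (ei X)).
Proof. case: HM => _ [_ [_ [E _]]]. by rewrite /lFm /= -!lmcE E. Qed.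
Lemma muN a b X Y (f : lhom (l:=mc M) X Y) :
  lmc (lmk (mu a b Y)) (A a (A b (lmk f))) = lmc (A (a * b)%g (lmk f)) (lmk (mu a b X)).
Proof. case: HM => _ [_ [_ [_ [/(_ a b) [E _] _]]]]. by rewrite /lFm /= -!lmcE E. Qed.
Lemma miN a b X Y (f : lhom (l:=mc M) X Y) :
  lmc (lmk (mi a b Y)) (A (a * b)%g (lmk f)) = lmc (A a (A b (lmk f))) (lmk (mi a b X)).
Proof. case: HM => _ [_ [_ [_ [/(_ a b) [_ E] _]]]]. by rewrite /lFm /= -!lmcE E. Qed.
Lemma Un1T h X : lmc (lmk (mu 1%g h X)) (lmk (e_ (al h X))) = lmk (lid (al h X)).
Proof.
case: HM => _ [_ [_ [_ [_ [_ [_ [/(_ h X) [E _] _]]]]]]].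
by rewrite -lmcE E lmtrE.
Qed.
Lemma Un2T h X : lmc (lmk (mu h 1%g X)) (A h (lmk (e_ X))) = lmk (lid (al h X)).
Proof.
case: HM => _ [_ [_ [_ [_ [_ [_ [/(_ h X) [_ E] _]]]]]]].
by rewrite /lFm /= -lmcE E lmtrE.
Qed.
Lemma AsT a b c X : lmc (lmk (mu (a * b)%g c X)) (lmk (mu a b (al c X))) =
  lmc (lmk (mu a (b * c)%g X)) (A a (lmk (mu b c X))).
Proof.
case: HM => _ [_ [_ [_ [_ [_ [_ [_ E]]]]]]].
by rewrite /lFm /= -!lmcE E lmtrE.
Qed.

Let HLM : is_lcat (mc M) := HL HM.

Lemma mu1l k h X : k = 1%g -> lmk (mu k h X) = lmk (ei (al h X)).
Proof.
move=> ->.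
have -> : lmk (mu 1%g h X) = lmc (lmk (mu 1%g h X)) (lmc (lmk (e_ (al h X))) (lmk (ei (al h X)))).
  by rewrite eK2 lidr'.
by rewrite lmcA // Un1T lidl'.
Qed.
Lemma mu1r h k X : k = 1%g -> lmk (mu h k X) = A h (lmk (ei X)).
Proof.
move=> ->.
have -> : lmk (mu h 1%g X) = lmc (lmk (mu h 1%g X)) (lmc (A h (lmk (e_ X))) (A h (lmk (ei X)))).
  by rewrite -(lFmC (HA HM h)) // eK2 (lFmI (HA HM h)) lidr'.
by rewrite lmcA // Un2T lidl'.
Qed.
Lemma mi1l k h X : k = 1%g -> lmk (mi k h X) = lmk (e_ (al h X)).
Proof.
move=> ->.
have -> : lmk (mi 1%g h X) = lmc (lmk (mi 1%g h X)) (lmc (lmk (mu 1%g h X)) (lmk (e_ (al h X)))).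
  by rewrite Un1T lidr' //; grp.
by rewrite lmcA // mK1 lidl'.
Qed.
Lemma mi1r h k X : k = 1%g -> lmk (mi h k X) = A h (lmk (e_ X)).
Proof.
move=> ->.
have -> : lmk (mi h 1%g X) = lmc (lmk (mi h 1%g X)) (lmc (lmk (mu h 1%g X)) (A h (lmk (e_ X)))).
  by rewrite Un2T lidr' //; grp.
by rewrite lmcA // mK1 lidl'.
Qed.
Lemma muI a a' b b' X : a = a' -> b = b' -> lmk (mu a b X) = lmk (mu a' b' X).
Proof. by move=> -> ->. Qed.
Lemma miI a a' b b' X : a = a' -> b = b' -> lmk (mi a b X) = lmk (mi a' b' X).
Proof. by move=> -> ->. Qed.
Lemma AI k k' m : k = k' -> A k m = A k' m.
Proof. by move=> ->. Qed.

Lemma AsB a b c X : lmc (A a (lmk (mu b c X))) (lmk (mi a b (al c X))) =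
  lmc (lmk (mi a (b * c)%g X)) (lmk (mu (a * b)%g c X)).
Proof.
transitivity (lmc (lmk (mi a (b*c)%g X)) (lmc (lmk (mu a (b*c)%g X))
   (lmc (A a (lmk (mu b c X))) (lmk (mi a b (al c X)))))).
  rewrite (lmcA HLM); [|lsc|lsc]. by rewrite (mK1 a (b*c)%g X) lidl' //; lsc.
lp HLM (esym (AsT a b c X)). lra HLM.
by rewrite mK2 lidr'.
Qed.


Lemma AsI a b c X : lmc (A a (lmk (mi b c X))) (lmk (mi a (b * c)%g X)) =
  lmc (lmk (mi a b (al c X))) (lmk (mi (a * b)%g c X)).
Proof.
symmetry.
apply: (@linv _ HLM (lmc (lmk (mu (a * b)%g c X)) (lmk (mu a b (al c X)))) _
             (lmc (lmk (mu a (b * c)%g X)) (A a (lmk (mu b c X)))) _); try lsc.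
- lra HLM. lp HLM (mK1 (a*b)%g c X). rewrite (lidl' HLM); [|reflexivity]. rewrite mK1 lsrc_mc. reflexivity.
- lra HLM. lp HLM (lFmP (HA HM a) (mK2 b c X) erefl). rewrite (lFmI (HA HM a)).
  rewrite (lidl' HLM); [|reflexivity]. rewrite mK2 ltgt_mc; reflexivity.
- exact: AsT.
Qed.

Lemma shI a X : lmc (A a (lmk (ei X))) (lmc (A a (lmk (mu (a^-1)%g a X))) (lmk (mi a (a^-1)%g (al a X))))
  = lmk (ei (al a X)).
Proof.
rewrite (AsB a (a^-1)%g a X) (mi1r _ _ (mulVg a)) (mu1l _ _ (mulgV a)).
lp HLM (lFmP (HA HM a) (eK1 X) erefl). rewrite (lFmI (HA HM a)).
by rewrite (lidl' HLM).
Qed.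
Lemma shIr a X (rest : LMor (mc M)) : ltgt rest = lsrc (lmk (mi a (a^-1)%g (al a X))) ->
  lmc (A a (lmk (ei X))) (lmc (A a (lmk (mu (a^-1)%g a X))) (lmc (lmk (mi a (a^-1)%g (al a X))) rest))
  = lmc (lmk (ei (al a X))) rest.
Proof. move=> e. rewrite -shI. lra HLM. done. Qed.

Lemma oaK h X (rest : LMor (mc M)) : ltgt rest = lsrc (lmk (mi (h * 1)%g (h^-1)%g (al h X))) ->
  lmc (lmk (mi h 1%g X)) (lmc (A (h * 1)%g (lmk (ei X))) (lmc (A (h * 1)%g (lmk (mu (h^-1)%g h X)))
     (lmc (lmk (mi (h * 1)%g (h^-1)%g (al h X))) rest))) =
  lmc (A h (lmk (e_ X))) (lmc (lmk (ei (al h X))) rest).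
Proof.
rewrite (mi1r h X (erefl 1%g)). move: (mulg1 h) => E. rewrite E => e.
lp HLM (lFmP (HA HM h) (eK2 X) erefl). rewrite (lFmI (HA HM h)) (lidl' HLM); [|lsc].
lp HLM (AsB h (h^-1)%g h X). rewrite (mi1r _ _ (mulVg h)) (mu1l _ _ (mulgV h)). done.
Qed.

Lemma eK1g X X' : X = X' -> lmc (lmk (ei X)) (lmk (e_ X')) = lmk (lid X').
Proof. move=> ->. exact: eK1. Qed.
Lemma eiNm Y (m : LMor (mc M)) : ltgt m = Y ->
  lmc (lmk (ei Y)) (A 1%g m) = lmc m (lmk (ei (lsrc m))).
Proof. case: m => [[X' Y'] f] /= <-. exact: eiN. Qed.
Lemma eiNr Y (m rest : LMor (mc M)) : ltgt m = Y -> ltgt rest = al 1%g (lsrc m) ->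
  lmc (lmk (ei Y)) (lmc (A 1%g m) rest) = lmc m (lmc (lmk (ei (lsrc m))) rest).
Proof.
move=> e1 e2.
have c1 : ltgt rest = lsrc (A 1%g m) by rewrite lsrc_Fm.
have c2 : ltgt (A 1%g m) = lsrc (lmk (ei Y)) by rewrite ltgt_Fm e1.
by rewrite (lmcA HLM c1 c2) (eiNm e1) -(lmcA HLM).
Qed.

Lemma bul_gcatP : is_gcat (bul_gcat M).
Proof.
case: (HL HM) => L1 L2 LA U1 U2.
split => /=.
- move=> a b X Y Z k g g' f. by rewrite L1.
- move=> a b X Y Z k g f f'. case: (HA HM a) => -> _ _. by rewrite L1 L2.
- move=> a b c W X Y Z h g f. apply: lmk_inj. lnorm HLM.
  lp HLM (miN a b f). by rewrite -(AsI a b c W).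
- move=> a X Y f. apply: lmk_inj. lnorm HLM.
  rewrite (mi1l a X (erefl 1%g)). lp HLM (eiN f). by rewrite eK1 lidr'.
- move=> a X Y f. apply: lmk_inj. lnorm HLM.
  rewrite (mi1r a X (erefl 1%g)). rewrite (lFmP (HA HM a) (eK1 X) erefl) (lFmI (HA HM a)).
  by rewrite lidr'.
Qed.

Lemma bul_shP : is_shifts (bul_shifts M).
Proof.
move=> a X; split; apply: lmk_inj => /=; lnorm HLM.
- rewrite (lidl' HLM); [|lsc]. exact: shI.
- rewrite (lidl' HLM); [|lsc]. rewrite mK2 lidr' //; lsc.
Qed.

Lemma bul_objP : is_gscat (bul_obj M).
Proof. split; [exact: bul_gcatP | exact: bul_shP]. Qed.
End MW.
Section MF.
Variables (M N : mcat R H).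
Hypotheses (HM : is_mcat M) (HN : is_mcat N).
Let HLM : is_lcat (mc M) := HL HM.
Let HLN : is_lcat (mc N) := HL HN.
Notation A k m := (lFm (mact M k) m).
Notation B k m := (lFm (mact N k) m).

Section F1.
Variables (F : mfun M N).
Hypothesis HF : is_mfun F.
Notation Fm m := (lFm (mf F) m).
Let HFl : is_lfun (mf F) := mfL HF.

Lemma sN h X Y (f : lhom (l:=mc M) X Y) :
  lmc (Fm (A h (lmk f))) (lmk (ms F h X)) = lmc (lmk (ms F h Y)) (B h (Fm (lmk f))).
Proof. case: HF => _ /(_ h) [E _] _ _. by rewrite /lFm /= -!lmcE E. Qed.
Lemma sU X : lmc (lmk (ms F 1%g X)) (lmk (@meps _ _ N (lfo (mf F) X))) = Fm (lmk (@meps _ _ M X)).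
Proof. case: HF => _ _ E _. by rewrite -lmcE E. Qed.
Lemma sM a b X : lmc (Fm (lmk (@mmu _ _ M a b X)))
   (lmc (lmk (ms F a (lfo (mact M b) X))) (B a (lmk (ms F b X)))) =
  lmc (lmk (ms F (a * b)%g X)) (lmk (@mmu _ _ N a b (lfo (mf F) X))).
Proof. case: HF => _ _ _ E. by rewrite /lFm /= -!lmcE E. Qed.

Lemma sMI a b X : lmc (Fm (lmk (@mmuinv _ _ M a b X))) (lmk (ms F (a * b)%g X)) =
  lmc (lmk (ms F a (lfo (mact M b) X))) (lmc (B a (lmk (ms F b X))) (lmk (@mmuinv _ _ N a b (lfo (mf F) X)))).
Proof.
transitivity (lmc (Fm (lmk (@mmuinv _ _ M a b X))) (lmc (lmk (ms F (a * b)%g X))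
   (lmc (lmk (@mmu _ _ N a b (lfo (mf F) X))) (lmk (@mmuinv _ _ N a b (lfo (mf F) X)))))).
  by rewrite (mK2 HN) lidr'.
lp HLN (esym (sM a b X)). lp HLN (lFmP HFl (mK1 HM a b X) erefl). rewrite (lFmI HFl).
by rewrite (lidl' HLN); [|lsc].
Qed.

Lemma sUI X : lmc (Fm (lmk (@mepsinv _ _ M X))) (lmk (ms F 1%g X)) = lmk (@mepsinv _ _ N (lfo (mf F) X)).
Proof.
transitivity (lmc (Fm (lmk (@mepsinv _ _ M X))) (lmc (lmk (ms F 1%g X))
   (lmc (lmk (@meps _ _ N (lfo (mf F) X))) (lmk (@mepsinv _ _ N (lfo (mf F) X)))))).
  by rewrite (eK2 HN) lidr'.
lp HLN (sU X). lp HLN (lFmP HFl (eK1 HM X) erefl). rewrite (lFmI HFl).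
by rewrite (lidl' HLN); [|lsc].
Qed.

Lemma bul_funP : is_gfun (bul_fun F).
Proof.
case: (HL HN) => L1 L2 LA U1 U2.
split => /=.
- move=> a X Y k f f'. case: HFl => -> _ _. by rewrite L1.
- move=> a b X Y Z g f. apply: lmk_inj. lnorm HLN.
  lp HLN (esym (sN a f)). by rewrite sMI.
- move=> X. apply: lmk_inj. lnorm HLN. exact: sUI.
Qed.
End F1.

Section F2.
Variables (E F : mfun M N).
Hypotheses (HE : is_mfun E) (HF : is_mfun F).
Variable t : mnat E F.
Hypothesis Ht : is_mnat t.
Let HFl : is_lfun (mf F) := mfL HF.
Let HEl : is_lfun (mf E) := mfL HE.

Lemma tN X Y (f : lhom (l:=mc M) X Y) :
  lmc (lFm (mf F) (lmk f)) (lmk (t X)) = lmc (lmk (t Y)) (lFm (mf E) (lmk f)).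
Proof. case: Ht => E1 _. by rewrite /lFm /= -!lmcE E1. Qed.
Lemma tS h X : lmc (lmk (t (lfo (mact M h) X))) (lmk (ms E h X)) =
  lmc (lmk (ms F h X)) (B h (lmk (t X))).
Proof. case: Ht => _ E1. by rewrite /lFm /= -!lmcE E1. Qed.

Lemma bul_natP : is_gnat (bul_nat t).
Proof.
move=> a X Y f /=. apply: lmk_inj. lnorm HLN.
rewrite (mi1r HN a (lfo (mf E) X) (erefl 1%g)).
lp HLN (lFmP (HA HN a) (eK1 HN (lfo (mf E) X)) erefl). rewrite (lFmI (HA HN a)) (lidr' HLN); [|lsc].
rewrite (mi1l HN a (lfo (mf E) X) (erefl 1%g)).
lp HLN (eiN HN (lfm (mf E) f)). lp HLN (eiN HN (ms E a X)).
rewrite (eK1 HN) (lidr' HLN); [|lsc].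
lp HLN (esym (tS a X)). lp HLN (tN f). done.
Qed.
End F2.

Lemma bul_fidP : bul_fun (mfid M) = gfid (bul_obj M).
Proof.
apply: gfun_eq => a X Y f /=. by case: (HL HM) => _ _ _ _ ->.
Qed.

Lemma bul_nidP (F : mfun M N) : bul_nat (mnid F) = gnid (bul_fun F).
Proof.
apply: functional_extensionality_dep => X /=. rewrite /bul_nat /mnid /gnid /=.
by case: (HL HN) => _ _ _ -> _.
Qed.

Lemma bul_nvP (E F G : mfun M N) (t : mnat E F) (u : mnat F G) :
  bul_nat (mnvcomp u t) = gnvcomp (bul_nat u) (bul_nat t).
Proof.
apply: functional_extensionality_dep => X.
rewrite /bul_nat /mnvcomp /gnvcomp /=. apply: lmk_inj. lnorm HLN.
rewrite (mi1l HN 1%g (lfo (mf E) X) (erefl 1%g)).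
lp HLN (eiN HN (t X)). lp HLN (eiN HN (@mepsinv _ _ N (lfo (mf E) X))).
by rewrite (eK1 HN) (lidr' HLN); [|lsc].
Qed.
End MF.

Lemma bul_fcompP (M N P : mcat R H) (F : mfun M N) (G : mfun N P) :
  is_mcat M -> is_mcat N -> is_mcat P -> is_mfun F -> is_mfun G ->
  bul_fun (mfcomp G F) = gfcomp (bul_fun G) (bul_fun F).
Proof.
move=> HM HN HP HF HG.
have HLP := HL HP.
apply: gfun_eq => a X Y f /=. apply: lmk_inj. by lnorm HLP.
Qed.

Lemma bul_nhP (M N P : mcat R H) (F F' : mfun M N) (G G' : mfun N P)
  (t : mnat F F') (u : mnat G G') :
  is_mcat M -> is_mcat N -> is_mcat P -> is_mfun F -> is_mfun F' -> is_mfun G -> is_mfun G' ->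
  bul_nat (mnhcomp u t) = gnhcomp (bul_nat u) (bul_nat t).
Proof.
move=> HM HN HP HF HF' HG HG'.
have HLP := HL HP. have HGl := mfL HG.
apply: functional_extensionality_dep => X.
rewrite /bul_nat /mnhcomp /gnhcomp /=. apply: lmk_inj. lnorm HLP.
rewrite (mi1l HP 1%g (lfo (mf G) (lfo (mf F) X)) (erefl 1%g)).
lp HLP (eiN HP (lfm (mf G) (t X))). lp HLP (eiN HP (lfm (mf G) (@mepsinv _ _ N (lfo (mf F) X)))).
lp HLP (eiN HP (ms G 1%g (lfo (mf F) X))).
rewrite (eK1 HP) (lidr' HLP); [|lsc].
by rewrite (sUI HN HP HG).
Qed.
Section NU.
Variable M : mcat R H.
Hypothesis HM : is_mcat M.
Let HLM : is_lcat (mc M) := HL HM.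
Notation A k m := (lFm (mact M k) m).

Lemma muob a b X : @lmk (mc M) _ _ (@mmu _ _ (one_obj (bul_obj M)) a b X) =
  lmc (lmk (@mmu _ _ M a b X)) (lmk (@mepsinv _ _ M (lfo (mact M a) (lfo (mact M b) X)))).
Proof.
rewrite /=. lnorm HLM. rewrite (lidl' HLM); [|lsc].
lp HLM (AsB HM (a * b)%g (b^-1)%g b X). rewrite (mi1r HM _ _ (mulVg b)).
lp HLM (lFmP (HA HM (a * b)%g) (eK1 HM X) erefl). rewrite (lFmI (HA HM _)) (lidl' HLM); [|lsc].
rewrite (mulgK b a). by rewrite (shI HM).
Qed.

Lemma nu_funP : is_mfun (nu_comp M).
Proof.
case: (HL HM) => L1 L2 LA U1 U2.
split.
- split => /=.
  + move=> X Y k f f'. by rewrite L1.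
  + move=> X Y Z g f; apply: lmk_inj; lnorm HLM.
    rewrite (mi1l HM 1%g X (erefl 1%g)). lp HLM (esym (eN HM f)). done.
  + move=> X; apply: lmk_inj; lnorm HLM. by rewrite (eK1 HM).
- move=> h; split.
  + move=> X Y f /=; apply: lmk_inj; lnorm HLM.
    rewrite (lidl' HLM); [|lsc]. rewrite (lidl' HLM); [|lsc]. rewrite (lidr' HLM); [|lsc].
    rewrite (oaK HM); [|lsc]. rewrite (eK1 HM). rewrite (lidr' HLM); [|lsc]. done.
  + move=> X; exists (lid _); split; apply: lmk_inj; lnorm HLM; by rewrite (lidl' HLM).
- move=> X /=; apply: lmk_inj; lnorm HLM. by rewrite !(lidl' HLM).
- move=> a b X /=. apply: lmk_inj. lnorm HLM.
  do 3 (rewrite (lidl' HLM); [|lsc]). rewrite (lidr' HLM); [|lsc].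
  lp HLM (AsB HM (a * b)%g (b^-1)%g b X). rewrite (mi1r HM _ _ (mulVg b)).
  lp HLM (lFmP (HA HM (a * b)%g) (eK1 HM X) erefl). rewrite (lFmI (HA HM _)) (lidl' HLM); [|lsc].
  rewrite (mulgK b a). rewrite (shIr HM); [|lsc]. rewrite (eK1 HM) (lidr' HLM); [|lsc]. done.
Qed.

Definition nu_inv : mfun M (one_obj (bul_obj M)) :=
  @MFun _ _ M (one_obj (bul_obj M))
    (@LFun _ (mc M) (one_lcat (bul_obj M)) id
       (fun X Y (f : lhom (l:=mc M) X Y) => lcomp f (@mepsinv _ _ M X)))
    (fun h X => @mepsinv _ _ M (lfo (mact M h) X)).

Ltac eipush := rewrite (eiNr HM); [|lsc|lsc]; rewrite ?(lsrc_Fm, ltgt_Fm, lsrc_mk, ltgt_mk).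

Lemma nu_invP : is_mfun nu_inv.
Proof.
have Hob := one_objP (bul_objP HM).
case: (HL HM) => L1 L2 LA U1 U2.
split.
- split => /=.
  + move=> X Y k f f'. by rewrite L1.
  + move=> X Y Z g f; apply: lmk_inj; lnorm HLM.
    rewrite (mi1l HM 1%g X (erefl 1%g)).
    lp HLM (eiN HM f). lp HLM (eiN HM (@mepsinv _ _ M X)). by rewrite (eK1 HM) (lidr' HLM).
  + move=> X; apply: lmk_inj; lnorm HLM. by rewrite (lidl' HLM).
- move=> h; split.
  + move=> X Y f /=; apply: lmk_inj; lnorm HLM.
    rewrite (mi1l HM 1%g (lfo (mact M h) X) (erefl 1%g)).
    lp HLM (eiN HM (@mepsinv _ _ M (lfo (mact M h) X))). rewrite (eK1 HM) (lidr' HLM); [|lsc].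
    rewrite (lidl' HLM); [|lsc]. do 6 eipush.
    rewrite (eK1g HM); [|grp]. rewrite (oaK HM); [|lsc].
    lp HLM (lFmP (HA HM h) (eK1 HM X) erefl). rewrite (lFmI (HA HM h)) (lidl' HLM); [|lsc].
    by rewrite (lidr' HLM); [|lsc].
  + move=> X; exists (@mepsinv _ _ M (lfo (mact M h) X)); split => /=; apply: (@lmk_inj (mc M)); lnorm HLM.
    * rewrite (mi1l HM 1%g (lfo (mact M h) X) (erefl 1%g)).
      lp HLM (eiN HM (@mepsinv _ _ M (lfo (mact M h) X))). by rewrite (eK1 HM) (lidr' HLM).
    * rewrite (mi1l HM 1%g (lfo (mact M h) X) (erefl 1%g)).
      lp HLM (eiN HM (@mepsinv _ _ M (lfo (mact M h) X))). by rewrite (eK1 HM) (lidr' HLM).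
- move=> X /=; apply: lmk_inj; lnorm HLM.
  rewrite (lidl' HLM); [|lsc]. rewrite (mi1l HM 1%g X (erefl 1%g)). by rewrite (eK1 HM) (eK2 HM).
- move=> a b X.
  case: Hob => HLob [HAob _].
  have E1 : forall k Z, ms nu_inv k Z = lid (l:=mc (one_obj (bul_obj M))) (lfo (mact M k) Z).
    by [].
  rewrite !E1. case: (HAob a) => [[_ _ ->] _]. case: HLob => _ _ _ V1 V2.
  rewrite !V1 !V2. apply: (@lmk_inj (mc M)). rewrite muob /=. by rewrite lmcE.
Qed.

Lemma nu_isoP : exists G : mfun M (one_obj (bul_obj M)),
  [/\ is_mfun G, mfcomp (nu_comp M) G = mfid M &
      mfcomp G (nu_comp M) = mfid (one_obj (bul_obj M))].
Proof.
exists nu_inv; split; first exact: nu_invP.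
- rewrite /mfcomp /mfid /lfcomp /lfid /=. apply: mfun_eq.
  + do 3 apply: functional_extensionality_dep => ?. apply: lmk_inj; lnorm HLM.
    by rewrite (eK1 HM) (lidr' HLM).
  + move=> h X. apply: lmk_inj; lnorm HLM.
    lp HLM (eK1 HM (lfo (mact M h) X)). by rewrite (lidl' HLM).
- rewrite /mfcomp /mfid /lfcomp /lfid /=. apply: mfun_eq.
  + do 3 apply: functional_extensionality_dep => ?. apply: (@lmk_inj (mc M)); lnorm HLM.
    by rewrite (eK2 HM) (lidr' HLM).
  + move=> h X /=. apply: (@lmk_inj (mc M)); lnorm HLM.
    rewrite (lidl' HLM); [|lsc]. rewrite (mi1l HM 1%g (lfo (mact M h) X) (erefl 1%g)).
    lp HLM (eiN HM (@mepsinv _ _ M (lfo (mact M h) X))). by rewrite (eK1 HM) (lidr' HLM).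
Qed.
End NU.

Lemma nu_natP (M N : mcat R H) (F : mfun M N) : is_mcat M -> is_mcat N -> is_mfun F ->
  mfcomp (nu_comp N) (Defs.one_fun (bul_fun F)) = mfcomp F (nu_comp M).
Proof.
move=> HM HN HF. have HLN := HL HN. have HFl := mfL HF.
rewrite /mfcomp /lfcomp /=. apply: mfun_eq.
- apply: functional_extensionality_dep => x; apply: functional_extensionality_dep => y.
  apply: functional_extensionality_dep => f. apply: (@lmk_inj (mc N)); lnorm HLN.
  by lp HLN (sU HF x).
- move=> h X /=. apply: (@lmk_inj (mc N)); lnorm HLN.
  rewrite !(lidl' HLN); try lsc. rewrite (shIr HN); [|lsc].
  lp HLN (eK1 HN (lfo (mact N h) (lfo (mf F) X))). rewrite (lidl' HLN); [|lsc].
  by rewrite (lidr' HLN).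
Qed.

Lemma nu_2natP (M N : mcat R H) (E F : mfun M N) (t : mnat E F) :
  is_mcat M -> is_mcat N -> is_mfun E -> is_mfun F -> is_mnat t ->
  mnhcomp (mnid (nu_comp N)) (one_nat (bul_nat t)) = mnhcomp t (mnid (nu_comp M)).
Proof.
move=> HM HN HE HF Ht. have HLN := HL HN. have HFl := mfL HF.
apply: functional_extensionality_dep => X.
rewrite /mnhcomp /mnid /one_nat /bul_nat /=. apply: (@lmk_inj (mc N)); lnorm HLN.
rewrite (lidl' HLN); [|lsc]. by rewrite (eK1 HN).
Qed.
End W.

Theorem mainTheorem17 (R : comNzRingType) (H : groupType) :
  one_is_2functor R H /\ bul_is_2functor R H /\
  nu_is_2natiso R H /\ eta_is_2natiso R H.
Proof.
split; [|split; [|split]].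
- split; [|split;[|split;[|split;[|split;[|split;[|split]]]]]].
  + by move=> C HC; apply: one_objP.
  + by move=> C D F HC HD HF; apply: one_funP.
  + by move=> C D F G t HC HD HF HG Ht; apply: one_natP.
  + by move=> C HC; apply: one_fidP.
  + by move=> C D E F G HC HD HE HF HG; apply: one_fcompP.
  + by [].
  + by [].
  + by [].
- split; [|split;[|split;[|split;[|split;[|split;[|split]]]]]].
  + by move=> M HM; apply: bul_objP.
  + by move=> M N F HM HN HF; apply: bul_funP.
  + by move=> M N E F t HM HN HE HF Ht; apply: bul_natP.
  + by move=> M HM; apply: bul_fidP.
  + by move=> M N P F G HM HN HP HF HG; apply: bul_fcompP.
  + by move=> M N F HM HN HF; apply: bul_nidP.
  + by move=> M N E F G t u HM HN HE HF HG Ht Hu; apply: bul_nvP.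
  + by move=> M N P F F' G G' t u HM HN HP HF HF' HG HG' Ht Hu; apply: bul_nhP.
- split.
  + by move=> M HM; apply: nu_funP.
  + by move=> M HM; apply: nu_isoP.
  + by move=> M N F HM HN HF; apply: nu_natP.
  + by move=> M N E F t HM HN HE HF Ht; apply: nu_2natP.
- split.
  + by move=> C HC; apply: eta_funP.
  + by move=> C HC; apply: eta_iso.
  + by move=> C D F HC HD HF; apply: eta_natP.
  + by move=> C D F G t HC HD HF HG Ht; apply: eta_2natP.
Qed.
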